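(* Let $n\ge2$, $m\ge1$, $0<\alpha_1\le\dots\le\alpha_m$ with $\sum\alpha_j=1$, and let $(A,\tau)=(\mathbb{C}p_1\oplus\cdots\oplus\mathbb{C}p_m,\tau_1)*(\mathbb{M}_n,tr_n)$ be the reduced free product ($\tau_1(p_j)=\alpha_j$). Let $\{e_{ij}\}$ be matrix units of $\mathbb{M}_n\subset A$ and $u=\sum_{i=1}^{n-1}e_{i,i+1}+e_{n,1}$. Let $l$ be an integer with $l\mid n$, $1<l<n$ (for part (ii)). Then: (i) The family consisting of the $n+1$ subalgebras $C^*(u^kp_1u^{-k},\dots,u^kp_mu^{-k})$, $k=0,\dots,n-1$, and $C^*(e_{11},\dots,e_{nn})$ is free in $(A,\tau)$. More generally, if $\omega\in\Lambda^\circ\big(C^*(p_1,\dots,p_m)^\circ,\dots,C^*(u^{n-1}p_1u^{1-n},\dots,u^{n-1}p_mu^{1-n})^\circ,C^*(e_{11},\dots,e_{nn})^\circ\big)$, then $\tau(\omega u^r)=0$ for all $0\le r\le n-1$. (ii) The family consisting of the $l+1$ subalgebras $C^*(u^kp_1u^{-k},\dots,u^kp_mu^{-k})$, $k=0,\dots,l-1$, and $C^*(e_{11},\dots,e_{nn},u^l,u^{2l},\dots,u^{n-l})$ is free in $(A,\tau)$. More generally, if $\omega\in\Lambda^\circ\big(C^*(p_1,\dots,p_m)^\circ,\dots,C^*(u^{l-1}p_1u^{1-l},\dots,u^{l-1}p_mu^{1-l})^\circ,C^*(e_{11},\dots,e_{nn},u^l,\dots,u^{n-l})^\circ\big)$,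 then $\tau(\omega u^r)=0$ for all $0\le r\le l-1$.
   Context: Reduced free product: the unique unital $C^*$-algebra with state generated by unital copies of the factors, restricting to the given traces, in which they are free, with faithful GNS representation; here $\tau$ is a faithful trace. A family of unital $C^*$-subalgebras $D_i$ is free in $(A,\tau)$ if $\tau(d_1\cdots d_r)=0$ whenever $d_s\in D_{i_s}$, $i_1\ne i_2\ne\dots\ne i_r$, and $\tau(d_s)=0$ for all $s$. For a unital subalgebra $D$, $D^\circ=\{d\in D:\tau(d)=0\}$. For unital subalgebras $D_1,\dots,D_k$, $\Lambda^\circ(D_1^\circ,\dots,D_k^\circ)$ is the set of all products $d_1d_2\cdots d_j$ of nonzero length with $d_t\in D_{i_t}^\circ$ and $i_t\ne i_{t+1}$ for $1\le t\le j-1$. *)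

(* Defs.v *)
From mathcomp Require Import all_boot all_order all_algebra.
From mathcomp Require Import reals complex.
Import GRing.Theory Num.Theory.
Set Implicit Arguments. Unset Strict Implicit. Unset Printing Implicit Defensive.
Local Open Scope ring_scope.
Local Open Scope complex_scope.

Section CStar.
Variables (R : realType) (A : algType R[i]).
Variables (star : A -> A) (nrm : A -> R).

Definition is_cstar_algebra : Prop :=
  (forall x, star (star x) = x) /\
  (forall x y, star (x + y) = star x + star y) /\
  (forall (c : R[i]) x, star (c *: x) = c^* *: star x) /\
  (forall x y, star (x * y) = star y * star x) /\
  (forall x, 0 <= nrm x) /\ (forall x, nrm x = 0 -> x = 0) /\
  (forall x y, nrm (x + y) <= nrm x + nrm y) /\
  (forall (c : R[i]) x, (nrm (c *: x))%:C = `|c| * (nrm x)%:C) /\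
  (forall x y, nrm (x * y) <= nrm x * nrm y) /\
  (forall x, nrm (star x * x) = nrm x ^+ 2) /\
      (forall s : nat -> A,
         (forall e : R, 0 < e -> exists N, forall k l, (N <= k)%N -> (N <= l)%N ->
              nrm (s k - s l) < e) ->
         exists x, forall e : R, 0 < e -> exists N, forall k, (N <= k)%N ->
              nrm (s k - x) < e).

Definition closed_star_subalg (D : A -> Prop) : Prop :=
  D 1 /\
  (forall x y, D x -> D y -> D (x + y)) /\
  (forall (c : R[i]) x, D x -> D (c *: x)) /\
  (forall x y, D x -> D y -> D (x * y)) /\
  (forall x, D x -> D (star x)) /\
      (forall (s : nat -> A) x, (forall k, D (s k)) ->
         (forall e : R, 0 < e -> exists N, forall k, (N <= k)%N -> nrm (s k - x) < e) ->
         D x).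

Definition cstar_gen (S : A -> Prop) : A -> Prop :=
  fun x => forall D, closed_star_subalg D -> (forall y, S y -> D y) -> D x.

Variable tau : A -> R[i].

Definition faithful_trace : Prop :=
  (forall x y, tau (x + y) = tau x + tau y) /\
  (forall (c : R[i]) x, tau (c *: x) = c * tau x) /\
  tau 1 = 1 /\
  (forall x y, tau (x * y) = tau (y * x)) /\
  (forall x, 0 <= tau (star x * x)) /\
  (forall x, tau (star x * x) = 0 -> x = 0).

Definition word_prod (I : Type) (w : seq (I * A)) : A :=
  foldr (fun p acc => p.2 * acc) 1 w.

Fixpoint alternating (I : Type) (w : seq (I * A)) : Prop :=
  match w with
  | p :: ((q :: _) as t) => p.1 <> q.1 /\ alternating t
  | _ => True
  end.

Fixpoint all_letters (I : Type) (P : I * A -> Prop) (w : seq (I * A)) : Prop :=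
  match w with
  | [::] => True
  | p :: t => P p /\ all_letters P t
  end.

(* w is an element of Lambda°(D_i^°): nonempty alternating word of
   centred elements d_t \in D_{i_t}^° *)
Definition in_Lambda0 (I : Type) (D : I -> A -> Prop) (w : seq (I * A)) : Prop :=
  [/\ w <> [::], alternating w & all_letters (fun p => D p.1 p.2 /\ tau p.2 = 0) w].

Definition free_family (I : Type) (D : I -> A -> Prop) : Prop :=
  forall w, in_Lambda0 D w -> tau (word_prod w) = 0.

End CStar.

(* Main.v *)
Require Import Defs.
From mathcomp Require Import all_boot all_order all_algebra.
From mathcomp Require Import reals complex.
From mathcomp Require Import zify ring lra.
Import Order.TTheory GRing.Theory Num.Theory.
Set Implicit Arguments. Unset Strict Implicit. Unset Printing Implicit Defensive.
Local Open Scope ring_scope.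
Local Open Scope complex_scope.

Section Basic.
Variables (R : realType) (A : algType R[i]) (star : A -> A) (nrm : A -> R).
Hypothesis hA : is_cstar_algebra star nrm.

Section CS.
Variable D : A -> Prop.
Hypothesis hD : closed_star_subalg star nrm D.
Lemma cs1 : D 1. Proof. by case: hD. Qed.
Lemma csD x y : D x -> D y -> D (x + y). Proof. by case: hD => _ [h _]; apply: h. Qed.
Lemma csZ c x : D x -> D (c *: x). Proof. by case: hD => _ [_ [h _]]; apply: h. Qed.
Lemma csM x y : D x -> D y -> D (x * y). Proof. by case: hD => _ [_ [_ [h _]]]; apply: h. Qed.
Lemma csS x : D x -> D (star x). Proof. by case: hD => _ [_ [_ [_ [h _]]]]; apply: h. Qed.
Lemma cs0 : D 0. Proof. by rewrite -(scale0r 1); apply: csZ; apply: cs1. Qed.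
Lemma csB x y : D x -> D y -> D (x - y).
Proof. move=> hx hy; rewrite -scaleN1r; apply: csD => //; exact: csZ. Qed.
Lemma csX x k : D x -> D (x ^+ k).
Proof. move=> hx; elim: k => [|k ih]; first by rewrite expr0; apply: cs1. by rewrite exprS; apply: csM. Qed.
Lemma cs_sum (I : finType) (F : I -> A) : (forall i, D (F i)) -> D (\sum_i F i).
Proof. move=> hF; apply: big_ind => //; [exact: cs0|exact: csD]. Qed.
End CS.

Lemma cstar_gen_closed S : closed_star_subalg star nrm (cstar_gen star nrm S).
Proof.
rewrite /closed_star_subalg; split; [|split; [|split; [|split; [|split]]]].
- by move=> D hD _; apply: cs1.
- by move=> x y hx hy D hD hS; apply: csD => //; [apply: hx|apply: hy].
- by move=> c x hx D hD hS; apply: csZ => //; apply: hx.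
- by move=> x y hx hy D hD hS; apply: csM => //; [apply: hx|apply: hy].
- by move=> x hx D hD hS; apply: csS => //; apply: hx.
- move=> s x hs hl D hD hS; move: (hD) => [_ [_ [_ [_ [_ h]]]]].
  by apply: (h s) => // k; apply: hs.
Qed.

Lemma cstar_gen_sub S x : S x -> cstar_gen star nrm S x.
Proof. by move=> hx D _ hS; apply: hS. Qed.

Lemma cstar_gen_ind S D x : closed_star_subalg star nrm D -> (forall y, S y -> D y) ->
  cstar_gen star nrm S x -> D x.
Proof. by move=> hD hS hx; apply: hx. Qed.



End Basic.

Section Main.
Variables (R : realType) (n : nat) (A : algType R[i]) (star : A -> A) (nrm : A -> R) (tau : A -> R[i]).
Hypothesis hn : (2 <= n)%N.
Hypothesis hA : is_cstar_algebra star nrm.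
Hypothesis htau : faithful_trace star tau.
Variable e : 'I_n -> 'I_n -> A.
Hypothesis he_mul : forall i j k l, e i j * e k l = if j == k then e i l else 0.
Hypothesis he_star : forall i j, star (e i j) = e j i.
Hypothesis he_sum : \sum_(i < n) e i i = 1.

Lemma tauD x y : tau (x + y) = tau x + tau y. Proof. by case: htau. Qed.
Lemma tauZ c x : tau (c *: x) = c * tau x. Proof. by case: htau => _ []. Qed.
Lemma tau1 : tau 1 = 1. Proof. by case: htau => _ [_ []]. Qed.
Lemma tauC x y : tau (x * y) = tau (y * x). Proof. by case: htau => _ [_ [_ []]]. Qed.
Lemma tau0 : tau 0 = 0. Proof. by rewrite -(scale0r 0) tauZ mul0r. Qed.
Lemma tauB x y : tau (x - y) = tau x - tau y.
Proof. by rewrite tauD -scaleN1r tauZ mulN1r. Qed.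

Lemma starD x y : star (x + y) = star x + star y. Proof. by case: hA => _ []. Qed.
Lemma starM x y : star (x * y) = star y * star x. Proof. by case: hA => _ [_ [_ []]]. Qed.
Lemma starK x : star (star x) = x. Proof. by case: hA. Qed.
Lemma star0 : star 0 = 0.
Proof. have h := starD 0 0; rewrite addr0 in h; by have := subrr (star 0); rewrite {1}h addrK. Qed.
Lemma star_sum (I : finType) (F : I -> A) : star (\sum_i F i) = \sum_i star (F i).
Proof. exact: (big_morph star starD star0). Qed.

Definition u := \sum_(i < n) e i (ordS i).
Definition sig (s : nat) (i : 'I_n) := iter s (@ordS n) i.

Lemma sig_val s i : val (sig s i) = ((i + s) %% n)%N.
Proof.
elim: s => [|s ih]; first by rewrite addn0 modn_small.
rewrite /sig iterS /= -/(sig s i) ih -addn1 modnDml addn1 addnS //.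
Qed.

Lemma sum_delta (j : 'I_n) (F : 'I_n -> A) : \sum_k (if j == k then F k else 0) = F j.
Proof.
rewrite (bigD1 j) //= eqxx big1 ?addr0 // => k hk; by rewrite eq_sym (negbTE hk).
Qed.

Lemma upow s : u ^+ s = \sum_i e i (sig s i).
Proof.
elim: s => [|s ih]; first by rewrite expr0 -he_sum.
rewrite exprSr ih /u mulr_suml; apply: eq_bigr => i _.
rewrite mulr_sumr (eq_bigr (fun k => if sig s i == k then e i (ordS k) else 0)).
  by rewrite sum_delta.
by move=> k _; rewrite he_mul.
Qed.

Lemma u_n : u ^+ n = 1.
Proof.
rewrite upow -he_sum; apply: eq_bigr => i _; congr (e i _); apply: val_inj.
by rewrite sig_val modnDr modn_small.
Qed.

Lemma u_star : u * star u = 1.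
Proof.
rewrite /u star_sum mulr_suml -he_sum; apply: eq_bigr => i _.
rewrite mulr_sumr (eq_bigr (fun k => if i == k then e i k else 0)).
  by rewrite sum_delta.
by move=> k _; rewrite he_star he_mul (inj_eq (@ordS_inj n)).
Qed.

Lemma star_u : star u = u ^+ (n - 1).
Proof.
have h : u ^+ (n - 1) * u = 1.
  by rewrite -exprSr subn1 prednK ?u_n //; lia.
by rewrite -[star u]mul1r -h -mulrA u_star mulr1.
Qed.


Lemma tau_sum (I : finType) (F : I -> A) : tau (\sum_i F i) = \sum_i tau (F i).
Proof. exact: (big_morph tau tauD tau0). Qed.

Definition Q (l : nat) (b : A) :=
  forall i j : 'I_n, (i %% l != j %% l)%N -> e i i * b * e j j = 0.

Lemma eii_mul i j : e i j = e i i * e i j.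
Proof. by rewrite he_mul eqxx. Qed.
Lemma eij_mul i j : e i j = e i j * e j j.
Proof. by rewrite he_mul eqxx. Qed.

Lemma tau_Q l b j : (l %| n)%N -> Q l b -> ~~ (l %| j)%N -> tau (b * u ^+ j) = 0.
Proof.
move=> hl hQ hj; rewrite upow mulr_sumr tau_sum big1 // => i _.
set s := sig j i.
have hs : (s %% l != i %% l)%N.
  rewrite /s sig_val (modn_dvdm _ hl); apply/negP => /eqP h; apply: (negP hj).
  have : (i + j == i + 0 %[mod l])%N by rewrite addn0 h.
  by rewrite eqn_modDl mod0n /dvdn.
rewrite eii_mul mulrA tauC eij_mul -mulrA (mulrA (e s s)) hQ //.
by rewrite mulr0 tau0.
Qed.

Lemma nrm_ge0 x : 0 <= nrm x. Proof. by case: hA => _ [_ [_ [_ []]]]. Qed.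
Lemma nrm_eq0 x : nrm x = 0 -> x = 0. Proof. by move: hA => [_ [_ [_ [_ [_ [h _]]]]]]; apply: h. Qed.
Lemma nrmM x y : nrm (x * y) <= nrm x * nrm y.
Proof. by move: hA => [_ [_ [_ [_ [_ [_ [_ [_ [h _]]]]]]]]]; apply: h. Qed.
Lemma nrmZ c x : (nrm (c *: x))%:C = `|c| * (nrm x)%:C.
Proof. by move: hA => [_ [_ [_ [_ [_ [_ [_ [h _]]]]]]]]; apply: h. Qed.
Lemma nrmN x : nrm (- x) = nrm x.
Proof. have := nrmZ (-1) x; rewrite scaleN1r normrN normr1 mul1r. by case. Qed.

Lemma nrm_small z : (forall eps : R, 0 < eps -> nrm z < eps) -> z = 0.
Proof.
move=> H; have := nrm_ge0 z; rewrite Order.POrderTheory.le_eqVlt => /orP [/eqP h| h].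
  by apply: nrm_eq0; rewrite -h.
by have := H _ h; rewrite ltxx.
Qed.

Definition conv (s : nat -> A) x := forall eps : R, 0 < eps ->
  exists N, forall k, (N <= k)%N -> nrm (s k - x) < eps.

Lemma conv_mul a b s x : conv s x -> conv (fun k => a * s k * b) (a * x * b).
Proof.
move=> hc eps heps; set K := nrm a * nrm b + 1.
have hK : 0 < K by rewrite /K; have := nrm_ge0 a; have := nrm_ge0 b; nra.
have [N hN] := hc (eps / K) (divr_gt0 heps hK).
exists N => k hk; have := hN k hk; set y := nrm (s k - x) => hy.
have hyK : y * K < eps by rewrite -ltr_pdivlMr.
rewrite -mulrBl -mulrBr.
apply: (le_lt_trans (nrmM _ _)).
apply: (@le_lt_trans _ _ (nrm a * y * nrm b)).
  rewrite ler_wpM2r ?nrm_ge0 //; apply: (le_trans (nrmM _ _)).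
  by rewrite ler_wpM2l ?nrm_ge0.
have := nrm_ge0 a; have := nrm_ge0 b; have : 0 <= y by apply: nrm_ge0.
rewrite /K in hyK; nra.
Qed.

Lemma closed_lim (D : A -> Prop) : closed_star_subalg star nrm D ->
  forall s x, (forall k, D (s k)) -> conv s x -> D x.
Proof. by move=> [_ [_ [_ [_ [_ h]]]]]. Qed.

Lemma Q_closed l : closed_star_subalg star nrm (Q l).
Proof.
rewrite /closed_star_subalg /Q; split; [|split; [|split; [|split; [|split]]]].
- move=> i j hij; rewrite mulr1 he_mul; case: eqP => // h; by rewrite h eqxx in hij.
- by move=> x y hx hy i j hij; rewrite mulrDr mulrDl hx // hy // addr0.
- by move=> c x hx i j hij; rewrite -scalerAr -scalerAl hx // scaler0.
- move=> x y hx hy i j hij.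
  have -> : x * y = x * (\sum_k e k k) * y by rewrite he_sum mulr1.
  rewrite mulr_sumr mulr_suml mulr_sumr mulr_suml big1 // => k _.
  case: (eqVneq (i %% l)%N (k %% l)%N) => hik.
    have hkj : (k %% l != j %% l)%N by rewrite -hik.
    transitivity ((e i i * x * e k k) * (e k k * y * e j j)); last by rewrite hy // mulr0.
    by rewrite !mulrA -(mulrA _ (e k k) (e k k)) -eii_mul.
  by rewrite !mulrA hx // !mul0r.
- move=> x hx i j hij.
  rewrite -[e i i]he_star -[e j j]he_star -!starM mulrA hx ?star0 //.
  by rewrite eq_sym.
- move=> s x hs hc i j hij; apply: nrm_small => eps heps.
  have [N hN] := conv_mul (e i i) (e j j) hc heps.
  by have := hN N (leqnn N); rewrite hs // sub0r nrmN.
Qed.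


Lemma Q_eaa l' a : Q l' (e a a).
Proof.
move=> i j hij; rewrite he_mul; case: (eqVneq i a) => [<-|hia]; last by rewrite mul0r.
rewrite he_mul; case: (eqVneq i j) => [hij'|//]; by rewrite hij' eqxx in hij.
Qed.

Lemma Q_upow l' s : (l' %| n)%N -> (l' %| s)%N -> Q l' (u ^+ s).
Proof.
move=> hl' hs i j hij; rewrite upow mulr_sumr mulr_suml big1 // => a _.
rewrite he_mul; case: (eqVneq i a) => [<-|hia]; last by rewrite mul0r.
rewrite he_mul; case: (eqVneq (sig s i) j) => [hsj|//]; exfalso; move/negP: hij; apply.
rewrite -hsj sig_val (modn_dvdm _ hl'); apply/eqP.
by move: hs => /dvdnP [c ->]; rewrite addnC modnMDl.
Qed.

Lemma conj_closed C v w : closed_star_subalg star nrm C -> v * w = 1 -> w * v = 1 ->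
  star v = w -> closed_star_subalg star nrm (fun x => C (w * x * v)).
Proof.
move=> hC hvw hwv hsv; have hsw : star w = v by rewrite -hsv starK.
rewrite /closed_star_subalg; split; [|split; [|split; [|split; [|split]]]].
- by rewrite /= mulr1 hwv; exact: (cs1 hC).
- by move=> x y hx hy /=; rewrite mulrDr mulrDl; apply: (csD hC).
- by move=> c x hx /=; rewrite -scalerAr -scalerAl; apply: (csZ hC).
- move=> x y hx hy /=; have -> : w * (x * y) * v = (w * x * v) * (w * y * v).
    by rewrite -!mulrA (mulrA v) hvw mul1r.
  exact: (csM hC).
- by move=> x hx /=; have := csS hC hx; rewrite !starM hsv hsw mulrA.
- move=> s x hs hc; apply: (closed_lim hC hs); exact: conv_mul.
Qed.

Variable m : nat.
Variable p : 'I_m -> A.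
Definition CP := cstar_gen star nrm (fun x => exists j, x = p j).
Definition CE := cstar_gen star nrm (fun x => exists i j, x = e i j).
Definition Fb (b : bool) := if b then CP else CE.
Hypothesis hfree : free_family tau Fb.

Definition LP (q : bool * A) := Fb q.1 q.2 /\ tau q.2 = 0.

Lemma hfree_app w : w <> [::] -> alternating w -> all_letters LP w -> tau (word_prod w) = 0.
Proof. by move=> h1 h2 h3; apply: hfree; split. Qed.

Definition fld (L : seq (A * A)) z := foldr (fun pr acc => pr.1 * pr.2 * acc) z L.
Fixpoint goodL (L : seq (A * A)) : Prop :=
  match L with [::] => True
  | pr :: L' => (CP pr.1 /\ tau pr.1 = 0 /\ CE pr.2 /\ tau pr.2 = 0) /\ goodL L' end.
Fixpoint wordL (L : seq (A * A)) (t : seq (bool * A)) :=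
  match L with [::] => t | pr :: L' => (true, pr.1) :: (false, pr.2) :: wordL L' t end.
Definition headT (w : seq (bool * A)) := match w with q :: _ => q.1 = true | [::] => True end.

Lemma fld_mulr L z y : fld L z * y = fld L (z * y).
Proof. by elim: L => //= pr L <-; rewrite mulrA. Qed.
Lemma fld_add L z y : fld L (z + y) = fld L z + fld L y.
Proof. by elim: L => //= pr L ->; rewrite mulrDr. Qed.
Lemma fld_scale L c z : fld L (c *: z) = c *: fld L z.
Proof. by elim: L => //= pr L ->; rewrite scalerAr. Qed.
Lemma wp_wordL L t : word_prod (wordL L t) = fld L (word_prod t).
Proof. by elim: L => //= pr L ->; rewrite mulrA. Qed.
Lemma alt_wordL L t : alternating t -> headT t ->
  alternating (wordL L t) /\ headT (wordL L t).
Proof.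
move=> ha hh; elim: L => /= [|pr L [ih1 ih2]]; first by split.
split => //; split => //.
by move: ih1 ih2; case: (wordL L t) => //= q w' h1 h2; split => //; rewrite h2.
Qed.
Lemma alt_false M W : alternating W -> headT W -> alternating ((false, M) :: W).
Proof. by case: W => // q W' h1 h2; split => //; rewrite h2. Qed.
Lemma let_wordL L t : all_letters LP t -> goodL L -> all_letters LP (wordL L t).
Proof.
move=> ht; elim: L => //= pr L ih [[h1 [h2 [h3 h4]]] hL]; rewrite /LP /=; do ! split => //.
exact: ih.
Qed.
Lemma wordL_nil L t : t <> [::] -> wordL L t <> [::].
Proof. by case: L. Qed.

Definition cen x := x - tau x *: 1.
Lemma tau_cen x : tau (cen x) = 0.
Proof. by rewrite /cen tauB tauZ tau1 mulr1 subrr. Qed.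
Lemma cenE x : x = cen x + tau x *: 1.
Proof. by rewrite /cen subrK. Qed.
Lemma CP_closed : closed_star_subalg star nrm CP. Proof. exact: cstar_gen_closed. Qed.
Lemma CE_closed : closed_star_subalg star nrm CE. Proof. exact: cstar_gen_closed. Qed.
Lemma CP_cen x : CP x -> CP (cen x).
Proof. by move=> h; apply: (csB CP_closed) => //; apply: (csZ CP_closed); exact: (cs1 CP_closed). Qed.
Lemma CE_cen x : CE x -> CE (cen x).
Proof. by move=> h; apply: (csB CE_closed) => //; apply: (csZ CE_closed); exact: (cs1 CE_closed). Qed.

Lemma core L dl Z : goodL L -> CP dl -> tau dl = 0 -> CE Z -> tau (fld L (dl * Z)) = 0.
Proof.
move=> hL hdl hdl0 hZ.
rewrite (cenE Z) mulrDr -scalerAr mulr1 fld_add fld_scale tauD tauZ.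
have -> : tau (fld L (dl * cen Z)) = 0.
  have -> : fld L (dl * cen Z) = word_prod (wordL L [:: (true, dl); (false, cen Z)]).
    by rewrite wp_wordL /= mulr1.
  apply: hfree_app; first exact: wordL_nil.
    by apply: (alt_wordL _ _ _).1.
  by apply: let_wordL => //=; rewrite /LP /=; do ! split => //; [exact: CE_cen|exact: tau_cen].
rewrite add0r; case: L hL => [|[d1 M1] L] /=; first by rewrite hdl0 mulr0.
move=> [[hd1 [hd10 [hM1 hM10]]] hL].
rewrite -mulrA tauC -mulrA fld_mulr (cenE (dl * d1)) fld_add fld_scale mulrDr -scalerAr tauD tauZ.
have hX : CP (dl * d1) by apply: (csM CP_closed).
have -> : M1 * fld L (cen (dl * d1)) = word_prod ((false, M1) :: wordL L [:: (true, cen (dl * d1))]).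
  by rewrite /= wp_wordL /= mulr1.
have -> : M1 * fld L 1 = word_prod ((false, M1) :: wordL L [::]).
  by rewrite /= wp_wordL.
have T3 : tau (word_prod ((false, M1) :: wordL L [:: (true, cen (dl * d1))])) = 0.
  apply: hfree_app => //.
    have [h1 h2] := alt_wordL L (t := [:: (true, cen (dl * d1))]) I erefl; exact: alt_false.
  rewrite /= /LP /=; do ! split => //; apply: let_wordL => //=; rewrite /LP /=; do ! split => //.
    exact: CP_cen.
  exact: tau_cen.
have T4 : tau (word_prod ((false, M1) :: wordL L [::])) = 0.
  apply: hfree_app => //.
    have [h1 h2] := alt_wordL L (t := [::]) I I; exact: alt_false.
  by rewrite /= /LP /=; do ! split => //; apply: let_wordL.
by rewrite T3 T4 mulr0 addr0 mulr0.
Qed.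


Lemma star1 : star 1 = 1.
Proof. have h := starM (star 1) 1; rewrite mulr1 starK mulr1 in h; by rewrite -h. Qed.

Lemma star_pow x k : star (x ^+ k) = star x ^+ k.
Proof.
elim: k => [|k ih]; first by rewrite !expr0 star1.
by rewrite exprS starM ih exprSr.
Qed.



Lemma su_pow k : star u ^+ k = u ^+ ((n - 1) * k).
Proof. by rewrite star_u exprM. Qed.

Lemma vs k : u ^+ k * star u ^+ k = 1.
Proof.
rewrite su_pow -exprD (_ : (k + (n - 1) * k = n * k)%N); first by rewrite exprM u_n expr1n.
have : (1 <= n)%N by lia. nia.
Qed.
Lemma sv k : star u ^+ k * u ^+ k = 1.
Proof.
rewrite su_pow -exprD (_ : ((n - 1) * k + k = n * k)%N); first by rewrite exprM u_n expr1n.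
have : (1 <= n)%N by lia. nia.
Qed.

Lemma u_CE : CE u.
Proof. apply: (cs_sum CE_closed) => i; apply: cstar_gen_sub; by exists i, (ordS i). Qed.
Lemma su_CE : CE (star u). Proof. exact: (csS CE_closed u_CE). Qed.
Lemma upow_CE k : CE (u ^+ k). Proof. exact: (csX CE_closed k u_CE). Qed.
Lemma supow_CE k : CE (star u ^+ k). Proof. exact: (csX CE_closed k su_CE). Qed.

Lemma Pletter k x : cstar_gen star nrm (fun y => exists j, y = u ^+ k * p j * star u ^+ k) x ->
  exists d, [/\ CP d, tau d = tau x & x = u ^+ k * d * star u ^+ k].
Proof.
move=> hx; exists (star u ^+ k * x * u ^+ k); split.
- apply: (cstar_gen_ind (D := fun x => CP (star u ^+ k * x * u ^+ k))) hx.
    apply: conj_closed; [exact: CP_closed|exact: vs|exact: sv|by rewrite star_pow].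
  move=> y [j ->] /=; rewrite !mulrA sv mul1r -mulrA sv mulr1.
  by apply: cstar_gen_sub; exists j.
- by rewrite tauC mulrA vs mul1r.
- by rewrite !mulrA vs mul1r -mulrA vs mulr1.
Qed.

Variable l : nat.
Hypothesis hl : (l %| n)%N.
Hypothesis hl0 : (0 < l)%N.

Lemma arith k k' : (k < l)%N -> (k' < l)%N -> (l %| k' + (n - 1) * k)%N -> k = k'.
Proof.
move=> hk hk' /dvdnP [a ha]; move: hl => /dvdnP [c hc].
have h : (a * l + k = c * k * l + k')%N.
  rewrite -ha; have : (1 <= n)%N by lia. rewrite hc; nia.
have := congr1 (modn^~ l) h; rewrite /= !modnMDl !modn_small //.
Qed.

Lemma tau_mid b k k' : Q l b -> (k = k' -> tau b = 0) -> (k < l)%N -> (k' < l)%N ->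
  tau (star u ^+ k * b * u ^+ k') = 0.
Proof.
move=> hQ hb hk hk'; rewrite -mulrA tauC -mulrA su_pow -exprD.
case: (eqVneq k k') => [hkk|hkk].
  subst k'; rewrite (_ : (k + (n - 1) * k = n * k)%N); last by move: hn; clear; nia.
  by rewrite exprM u_n expr1n mulr1 hb.
apply: (tau_Q hl hQ); apply/negP => hd; move/eqP: hkk; apply; exact: (arith hk hk' hd).
Qed.

Lemma Q1 : Q l 1. Proof. exact: (cs1 (Q_closed l)). Qed.

Variable G : option 'I_l -> A -> Prop.
Hypothesis hGS : forall (k : 'I_l) x, G (Some k) x ->
  cstar_gen star nrm (fun y => exists j, y = u ^+ k * p j * star u ^+ k) x.
Hypothesis hGN : forall x, G None x -> CE x /\ Q l x.

Definition LG (q : option 'I_l * A) := G q.1 q.2 /\ tau q.2 = 0.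

Lemma build N : forall rest k x T, (size rest < N)%N ->
  alternating ((Some k, x) :: rest) -> all_letters LG ((Some k, x) :: rest) -> CE T ->
  exists L dl Z, [/\ goodL L, CP dl, tau dl = 0, CE Z &
     word_prod ((Some k, x) :: rest) * T = u ^+ k * fld L (dl * Z)].
Proof.
elim: N => // N IH rest k x T hs ha [[hx hx0] hl'] hT.
rewrite /= in hx hx0.
have [d [hd hd0 hxd]] := Pletter (hGS hx); rewrite hx0 in hd0.
case: rest hs ha hl' => [|[o y] rest] hs ha hl'.
  exists [::], d, (star u ^+ k * T); split => //.
    by apply: (csM CE_closed) => //; exact: supow_CE.
  by rewrite /= hxd !mulr1 !mulrA.
case: o hs ha hl' => [k'|] hs /= [hne ha] [[hy hy0] hl'].
  have [L [dl [Z [h1 h2 h3 h4 h5]]]] := IH rest k' y T (ltnSE hs) ha (conj (conj hy hy0) hl') hT.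
  exists ((d, star u ^+ k * u ^+ k') :: L), dl, Z; split => //.
    split => //; split => //; split => //; split.
      by apply: (csM CE_closed); [exact: supow_CE|exact: upow_CE].
    rewrite /= -[star u ^+ k]mulr1; apply: tau_mid => //; first exact: Q1.
    by move=> hkk; case: hne; congr Some; apply: val_inj.
  rewrite -/(word_prod ((Some k', y) :: rest)) in h5.
  by rewrite /= -mulrA -/(word_prod ((Some k', y) :: rest)) h5 hxd /= !mulrA.
have [hbE hbQ] := hGN hy.
case: rest hs ha hl' => [|[o z] rest] hs ha hl'.
  exists [::], d, (star u ^+ k * y * T); split => //.
    apply: (csM CE_closed) => //; apply: (csM CE_closed) => //; exact: supow_CE.
  by rewrite /= hxd !mulr1 !mulrA.
case: o hs ha hl' => [k'|] hs /= [hne' ha] [[hz hz0] hl']; last by case: hne'.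
have [L [dl [Z [h1 h2 h3 h4 h5]]]] := IH rest k' z T (ltnW (ltnSE hs)) ha (conj (conj hz hz0) hl') hT.
exists ((d, star u ^+ k * y * u ^+ k') :: L), dl, Z; split => //.
  split => //; split => //; split => //; split.
    apply: (csM CE_closed); last exact: upow_CE.
    by apply: (csM CE_closed) => //; exact: supow_CE.
  apply: tau_mid => //; move=> _; exact: hy0.
rewrite /= in h5.
transitivity (x * y * (z * word_prod rest * T)); first by rewrite /= !mulrA.
by rewrite h5 hxd /= !mulrA.
Qed.


Lemma gen w r : in_Lambda0 tau G w -> (r < l)%N -> tau (word_prod w * u ^+ r) = 0.
Proof.
case=> hne ha hlet hr.
case: w hne ha hlet => [//|[[k|] x] rest] _ ha hlet.
  have [L [dl [Z [h1 h2 h3 h4 h5]]]] := build (ltnSn (size rest)) ha hlet (upow_CE r).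
  rewrite h5 tauC fld_mulr -mulrA; apply: core => //.
  by apply: (csM CE_closed) => //; exact: upow_CE.
move: hlet => [[hx hx0] hlet]; rewrite /= in hx hx0; have [hbE hbQ] := hGN hx.
case: rest ha hlet => [|[o y] rest] ha hlet.
  rewrite /= mulr1; case: r hr => [|r] hr; first by rewrite expr0 mulr1.
  apply: (tau_Q hl hbQ); apply/negP => /(dvdn_leq (ltn0Sn r)); lia.
case: o ha hlet => [k|] /= [hne' ha] hlet; last by case: hne'.
have [L [dl [Z [h1 h2 h3 h4 h5]]]] := build (ltnSn (size rest)) (k := k) (x := y) ha hlet (upow_CE r).
rewrite /= in h5.
transitivity (tau (x * (y * word_prod rest * u ^+ r))); first by rewrite !mulrA.
rewrite h5 mulrA tauC fld_mulr -mulrA; apply: core => //.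
by apply: (csM CE_closed) => //; apply: (csM CE_closed) => //; exact: upow_CE.
Qed.


End Main.

Unset Implicit Arguments.

Theorem lemma3p1
  (R : realType) (n m : nat) (hn : (2 <= n)%N) (hm : (0 < m)%N)
  (alpha : 'I_m -> R)
  (halpha_pos : forall j, 0 < alpha j)
  (halpha_mono : forall i j : 'I_m, (i <= j)%N -> alpha i <= alpha j)
  (halpha_sum : \sum_(j < m) alpha j = 1)
  (A : algType R[i]) (star : A -> A) (nrm : A -> R) (tau : A -> R[i])
  (hA : is_cstar_algebra star nrm)
  (htau : faithful_trace star tau)
  (* unital copy of C p_1 + ... + C p_m with tau(p_j) = alpha_j *)
  (p : 'I_m -> A)
  (hp_proj : forall j, star (p j) = p j /\ p j * p j = p j)
  (hp_orth : forall i j, i != j -> p i * p j = 0)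
  (hp_sum : \sum_(j < m) p j = 1)
  (hp_tau : forall j, tau (p j) = (alpha j)%:C)
  (* unital copy of M_n (matrix units) with tau restricting to tr_n *)
  (e : 'I_n -> 'I_n -> A)
  (he_mul : forall i j k l, e i j * e k l = if j == k then e i l else 0)
  (he_star : forall i j, star (e i j) = e j i)
  (he_sum : \sum_(i < n) e i i = 1)
  (he_tau : forall i j, tau (e i j) = if i == j then (n%:R)^-1 else 0)
  (* the two copies are free in (A, tau) and generate A *)
  (hfree : free_family tau (fun b : bool =>
      if b then cstar_gen star nrm (fun x => exists j, x = p j)
      else cstar_gen star nrm (fun x => exists i j, x = e i j)))
  (hgen : forall x, cstar_gen star nrm
      (fun y => (exists j, y = p j) \/ (exists i j, y = e i j)) x) :
  let u := \sum_(i < n) e i (ordS i) in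
  let Pk := fun k : nat =>
      cstar_gen star nrm (fun x => exists j, x = u ^+ k * p j * star u ^+ k) in
  (* (i) *)
  (let F := fun o : option 'I_n =>
        match o with
        | Some k => Pk (nat_of_ord k)
        | None => cstar_gen star nrm (fun x => exists i, x = e i i)
        end in
   free_family tau F /\
   (forall w, in_Lambda0 tau F w ->
      forall r, (r < n)%N -> tau (word_prod w * u ^+ r) = 0)) /\
  (* (ii) *)
  (forall l : nat, (l %| n)%N -> (1 < l < n)%N ->
   let G := fun o : option 'I_l =>
        match o with
        | Some k => Pk (nat_of_ord k)
        | None => cstar_gen star nrm (fun x =>
            (exists i, x = e i i) \/
            (exists t, (0 < t < n %/ l)%N /\ x = u ^+ (l * t)))
        end in
   free_family tau G /\
   (forall w, in_Lambda0 tau G w ->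
      forall r, (r < l)%N -> tau (word_prod w * u ^+ r) = 0)).
Proof.
move=> u Pk.
have hfree' : free_family tau (Fb star nrm e p) := hfree.
have Hgen := @gen R n A star nrm tau hn hA htau e he_mul he_star he_sum m p hfree'.
have hCE := @CE_closed R n A star nrm e.
have hQ : forall l, closed_star_subalg star nrm (Q e l) by move=> l; apply: Q_closed.
split.
  move=> F.
  have HF : forall w, in_Lambda0 tau F w ->
      forall r, (r < n)%N -> tau (word_prod w * u ^+ r) = 0.
    move=> w hw r hr; apply: (Hgen n (dvdnn n) (ltnW hn) F) => //.
    move=> x /= hx; split.
      apply: (cstar_gen_ind (D := CE star nrm e)) hx => // y [i ->].
      by apply: cstar_gen_sub; exists i, i.
    apply: (cstar_gen_ind (D := Q e n)) hx => // y [i ->].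
    exact: Q_eaa.
  split => // w hw; have := HF w hw 0 (ltnW hn); by rewrite expr0 mulr1.
move=> l hl /andP [hl1 hln] G.
have HG : forall w, in_Lambda0 tau G w ->
    forall r, (r < l)%N -> tau (word_prod w * u ^+ r) = 0.
  move=> w hw r hr; apply: (Hgen l hl (ltnW hl1) G) => //.
  move=> x /= hx; split.
    apply: (cstar_gen_ind (D := CE star nrm e)) hx => // y [[i ->]|[t [_ ->]]].
      by apply: cstar_gen_sub; exists i, i.
    exact: upow_CE.
  apply: (cstar_gen_ind (D := Q e l)) hx => // y [[i ->]|[t [_ ->]]].
    exact: Q_eaa.
  apply: Q_upow => //; exact: dvdn_mulr.
split => // w hw; have := HG w hw 0 (ltnW hl1); by rewrite expr0 mulr1.
Qed.
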